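(* Let $\mathcal{P}_1,\mathcal{P}_2\subseteq\mathbb{R}^n$ be non-empty topologically closed convex polyhedra. Suppose there exist a linear non-strict inequality constraint $\beta=(\langle \mathbf{a},\mathbf{x}\rangle\le b)$, with $\mathbf{a}\in\mathbb{R}^n\setminus\{\mathbf{0}\}$ and $b\in\mathbb{R}$, and a vector $\mathbf{p}\in\mathbb{R}^n$ such that: (1) $\mathbf{p}$ saturates $\beta$, i.e., $\langle\mathbf{a},\mathbf{p}\rangle=b$; (2) every point of $\mathcal{P}_1$ satisfies $\beta$, while some point of $\mathcal{P}_2$ violates $\beta$; (3) $\mathbf{p}\in\mathcal{P}_1\setminus\mathcal{P}_2$. Then $\mathcal{P}_1\cup\mathcal{P}_2$ is not convex.
   Context: A topologically closed convex polyhedron in $\mathbb{R}^n$ is a set of the form $\{\mathbf{x}\in\mathbb{R}^n : \langle\mathbf{a}_k,\mathbf{x}\rangle\le b_k,\ k=1,\dots,m\}$ for finitely many constraints with $\mathbf{a}_k\neq\mathbf{0}$. *)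

(* Defs.v *)
From HB Require Import structures.
From mathcomp Require Import all_boot all_order all_algebra.
From mathcomp Require Import reals.
Set Implicit Arguments. Unset Strict Implicit. Unset Printing Implicit Defensive.
Import Order.TTheory GRing.Theory Num.Theory.
Local Open Scope ring_scope.

Definition dotv (R : realType) (n : nat) (a x : 'rV[R]_n) : R :=
  \sum_(i < n) a 0 i * x 0 i.

Definition closed_polyhedron (R : realType) (n : nat) (P : 'rV[R]_n -> Prop) :=
  exists (m : nat) (A : 'I_m -> 'rV[R]_n) (B : 'I_m -> R),
    (forall k, A k != 0) /\
    (forall x, P x <-> (forall k, dotv (A k) x <= B k)).

Definition convex_set (R : realType) (n : nat) (S : 'rV[R]_n -> Prop) :=
  forall x y (t : R), S x -> S y -> 0 <= t -> t <= 1 ->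
    S ((1 - t) *: x + t *: y).

(* Main.v *)
Require Import Defs.
From HB Require Import structures.
From mathcomp Require Import all_boot all_order all_algebra.
From mathcomp Require Import reals.
From mathcomp Require Import ring lra.
Import Order.TTheory GRing.Theory Num.Theory.
Local Open Scope ring_scope.

Lemma dotv_comb (R : realType) (n : nat) (u x y : 'rV[R]_n) (t : R) :
  dotv u ((1 - t) *: x + t *: y) = (1 - t) * dotv u x + t * dotv u y.
Proof.
rewrite /dotv !mulr_sumr -big_split /=; apply: eq_bigr => i _.
rewrite !mxE; ring.
Qed.

Lemma small_t (R : realType) (c d B : R) : B < c ->
  exists t : R, [/\ 0 < t, t <= 1 & B < (1 - t) * c + t * d].
Proof.
move=> hBc; set e := c - B; have he : 0 < e by rewrite subr_gt0.
set m := `|c - d|; have hm : 0 <= m by rewrite /m normr_ge0.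
have hden : 0 < 2 * (e + m) by rewrite mulr_gt0 // ltr_wpDr.
have tD : (e / (2 * (e + m))) * (2 * (e + m)) = e by rewrite mulfVK ?gt_eqF.
have tp : 0 < e / (2 * (e + m)) by rewrite divr_gt0.
move: tD tp; set t := e / (2 * (e + m)) => tD tp.
exists t; split => //.
- nra.
- have h1 : t * (c - d) <= t * m.
    by rewrite ler_pM2l // /m ler_norm.
  have -> : (1 - t) * c + t * d = c - t * (c - d) by ring.
  rewrite /e in tD he; nra.
Qed.

Theorem lemma1 (R : realType) (n : nat) (P1 P2 : 'rV[R]_n -> Prop)
  (a : 'rV[R]_n) (b : R) (p : 'rV[R]_n) :
  closed_polyhedron P1 -> closed_polyhedron P2 ->
  (exists x, P1 x) -> (exists x, P2 x) ->
  a != 0 ->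
  dotv a p = b ->
  (forall x, P1 x -> dotv a x <= b) ->
  (exists x, P2 x /\ ~ (dotv a x <= b)) ->
  P1 p -> ~ P2 p ->
  ~ convex_set (fun x => P1 x \/ P2 x).
Proof.
move=> _ [m [A [B [_ HP2]]]] _ _ _ hp H1 [q [Pq hq]] P1p nP2p hconv.
have [k hk] : exists k, B k < dotv (A k) p.
  case: (boolP [exists k, B k < dotv (A k) p]) => [/existsP [k hk]|hn].
    by exists k.
  exfalso; apply: nP2p; apply/HP2 => k.
  rewrite leNgt; apply/negP => h; move/negP: hn; apply; apply/existsP; by exists k.
have [t [t0 t1 ht]] := @small_t R _ (dotv (A k) q) _ hk.
have hqb : b < dotv a q by rewrite ltNge; apply/negP.
case: (hconv p q t (or_introl P1p) (or_intror Pq) (ltW t0) t1) => [h|h].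
- have := H1 _ h; rewrite dotv_comb hp; nra.
- have := (proj1 (HP2 _) h) k; rewrite dotv_comb; lra.
Qed.
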